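(* Let $E=\{1,2,\ldots,D\}$ be a finite state space and let $(J_n,T_n)_{n\in\mathbb{N}}$ be random variables on a probability space $(\Omega,\mathcal{F},\mathbb{P})$ with $J_n\in E$, $T_n\in\mathbb{N}$, $T_0=0$, $T_n<T_{n+1}$, and age index $A_n=a+T_n$ for a fixed initial age $a$. Assume that $(J_n,T_n,A_n)$ is a non-homogeneous age-indexed Markov renewal process, i.e. the conditional distribution of $(J_{n+1},T_{n+1})$ given the whole past $\sigma(J_h,T_h,A_h,\ h\le n)$ depends only on $(J_n,T_n,A_n)$, through the kernel $$ {}^{b}Q_{ij}(s;t)=\mathbb{P}[J_{n+1}=j,\,T_{n+1}\le t\mid J_n=i,\,T_n=s,\,A_n=b],\qquad b=a+s. $$ Put ${}^{b}q_{ij}(s;t)={}^{b}Q_{ij}(s;t)-{}^{b}Q_{ij}(s;t-1)$ for $t>s$ and ${}^{b}q_{ij}(s;s)=0$, and ${}^{b}\overline{H}_i(s;t)=1-\sum_{j\in E}{}^{b}Q_{ij}(s;t)$. Let $N(t)=\sup\{n:T_n\le t\}$, $Z(t)=J_{N(t)}$, $B(t)=t-T_{N(t)}$, and for integers $0\le u\le s\le t$, $u'\ge 0$, $i,j\in E$ define $$ {}^{a+s-u}\phi_{ij}(u,s;u',t)=\mathbb{P}\big[Z(t)=j,\,B(t)=u'\mid Z(s)=i,\,B(s)=u,\,A_{N(s)}=a+T_{N(s)}\big] $$ (whenever ${}^{a+s-u}\overline{H}_i(s-u;s)>0$). Then $$ {}^{a+s-u}\phi_{ij}(u,s;u',t)=1_{\{i=j\}}1_{\{u'=t-s+u\}}\frac{{}^{a+s-u}\overline{H}_i(s-u;t)}{{}^{a+s-u}\overline{H}_i(s-u;s)}+\sum_{k\in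 E}\sum_{\theta=s+1}^{t-u'}\frac{{}^{a+s-u}q_{ik}(s-u;\theta)}{{}^{a+s-u}\overline{H}_i(s-u;s)}\;{}^{a+\theta}\phi_{kj}(0,\theta;u',t). $$
   Context: Here $J_n$ is the (health) state entered at the $n$-th transition and $T_n$ its time; $Z(t)$ is the age-indexed semi-Markov chain, $B(t)$ the backward recurrence time (time elapsed since the last transition), and the left superscript on $Q$, $q$, $\overline{H}$, $\phi$ denotes the age of the individual at the time of the last transition (entrance into the current state). Thus ${}^{b}q_{ij}(s;t)=\mathbb{P}[J_{n+1}=j,T_{n+1}=t\mid J_n=i,T_n=s,A_n=b]$ and ${}^{b}\overline{H}_i(s;t)=\mathbb{P}[T_{n+1}>t\mid J_n=i,T_n=s,A_n=b]$ with $b=a+s$. *)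

(* Defs.v *)
From HB Require Import structures.
From mathcomp Require Import all_boot all_order all_algebra.
From mathcomp Require Import all_classical all_reals all_analysis.
Set Implicit Arguments. Unset Strict Implicit. Unset Printing Implicit Defensive.
Import Order.TTheory GRing.Theory Num.Theory.
Local Open Scope classical_set_scope.
Local Open Scope ring_scope.

(* E = {1,...,D} is represented by 'I_D (states relabelled 0..D-1). *)

Definition Pr (R : realType) (d : measure_display) (Omega : measurableType d)
  (P : probability Omega R) (A : set Omega) : R := fine (P A).

(** N(t) = sup {n | T_n <= t}.  Since T_0 = 0 and T is strictly increasing in
    nat, T_n >= n, so the sup is attained among n <= t. *)
Definition Ncount (d : measure_display) (Omega : measurableType d)
  (T : nat -> Omega -> nat) (t : nat) (w : Omega) : nat :=
  (\max_(n < t.+1 | (T n w <= t)%N) (n : nat))%N.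

Definition Zproc (d : measure_display) (Omega : measurableType d) (D : nat)
  (J : nat -> Omega -> 'I_D) (T : nat -> Omega -> nat) (t : nat) (w : Omega) : 'I_D :=
  J (Ncount T t w) w.

Definition Bproc (d : measure_display) (Omega : measurableType d)
  (T : nat -> Omega -> nat) (t : nat) (w : Omega) : nat :=
  (t - T (Ncount T t w) w)%N.

Definition Aproc (d : measure_display) (Omega : measurableType d)
  (a : nat) (T : nat -> Omega -> nat) (n : nat) (w : Omega) : nat :=
  (a + T n w)%N.

(** Stated multiplicatively (P[H /\ F] = Q * P[H]) for every history H. *)
Definition is_age_MRP (R : realType) (d : measure_display) (Omega : measurableType d)
  (P : probability Omega R) (D : nat) (J : nat -> Omega -> 'I_D)
  (T : nat -> Omega -> nat) (a : nat)
  (Q : nat -> 'I_D -> 'I_D -> nat -> nat -> R) : Prop :=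
  forall (n : nat) (js : nat -> 'I_D) (ts : nat -> nat) (j : 'I_D) (t : nat),
    let H := [set w | forall h, (h <= n)%N ->
                J h w = js h /\ T h w = ts h /\ Aproc a T h w = (a + ts h)%N] in
    Pr P (H `&` [set w | J n.+1 w = j /\ (T n.+1 w <= t)%N])
      = Q (a + ts n)%N (js n) j (ts n) t * Pr P H.

Definition qker (R : realType) (D : nat) (Q : nat -> 'I_D -> 'I_D -> nat -> nat -> R)
  (b : nat) (i j : 'I_D) (s t : nat) : R :=
  if (s < t)%N then Q b i j s t - Q b i j s t.-1 else 0.

Definition Hbar (R : realType) (D : nat) (Q : nat -> 'I_D -> 'I_D -> nat -> nat -> R)
  (b : nat) (i : 'I_D) (s t : nat) : R :=
  1 - \sum_(j < D) Q b i j s t.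

Definition condev (d : measure_display) (Omega : measurableType d) (D : nat)
  (J : nat -> Omega -> 'I_D) (T : nat -> Omega -> nat) (a : nat)
  (i : 'I_D) (s u : nat) : set Omega :=
  [set w | Zproc J T s w = i /\ Bproc T s w = u
           /\ Aproc a T (Ncount T s w) w = (a + T (Ncount T s w) w)%N].

(** phi_{ij}(u,s;u',t) = P[Z(t)=j, B(t)=u' | Z(s)=i, B(s)=u, A_{N(s)}=a+T_{N(s)}]
    (elementary conditional probability; the age superscript a+s-u is
    determined by a, s, u).  Division by 0 yields 0 (MathComp convention). *)
Definition phi (R : realType) (d : measure_display) (Omega : measurableType d)
  (P : probability Omega R) (D : nat) (J : nat -> Omega -> 'I_D)
  (T : nat -> Omega -> nat) (a : nat) (i j : 'I_D) (u s u' t : nat) : R :=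
  Pr P ([set w | Zproc J T t w = j /\ Bproc T t w = u'] `&` condev J T a i s u)
  / Pr P (condev J T a i s u).

(* Main.v *)
Require Import Defs.
From HB Require Import structures.
From mathcomp Require Import all_boot all_order all_algebra.
From mathcomp Require Import all_classical all_reals all_analysis.
From mathcomp Require Import ring lra zify.
Import Order.TTheory GRing.Theory Num.Theory.
Local Open Scope classical_set_scope.
Local Open Scope ring_scope.

Section Base.
Context (R : realType) (d : measure_display) (Omega : measurableType d)
  (P : probability Omega R) (D : nat)
  (J : nat -> Omega -> 'I_D) (T : nat -> Omega -> nat)
  (mJ : forall (n : nat) (j : 'I_D), measurable (J n @^-1` [set j]))
  (mT : forall (n t : nat), measurable (T n @^-1` [set t]))
  (T0 : forall w, T 0%N w = 0%N)
  (Tinc : forall (n : nat) w, (T n w < T n.+1 w)%N).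

Lemma bigI_mem (I : eqType) (s : seq I) (F : I -> set Omega) w :
  (\big[setI/setT]_(i <- s) F i) w <-> (forall i, i \in s -> F i w).
Proof.
elim: s => [|x s IH]; first by rewrite big_nil; split.
rewrite big_cons; split.
  by move=> [Fx /IH Hs] i; rewrite inE => /orP[/eqP->|/Hs].
by move=> H; split; [apply: H; rewrite inE eqxx|apply/IH => i Hi; apply: H; rewrite inE Hi orbT].
Qed.

Lemma bigU_mem (I : eqType) (s : seq I) (F : I -> set Omega) w :
  (\big[setU/set0]_(i <- s) F i) w <-> (exists i, i \in s /\ F i w).
Proof.
elim: s => [|x s IH]; first by rewrite big_nil; split => // [[i []]].
rewrite big_cons; split.
  move=> [Fx|/IH [i [Hi Fi]]]; first by exists x; rewrite inE eqxx.
  by exists i; rewrite inE Hi orbT.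
by move=> [i []]; rewrite inE => /orP[/eqP-> Fi|Hi Fi]; [left|right; apply/IH; exists i].
Qed.

Lemma meas_det (N : nat) (S : set Omega) :
  (forall w w', (forall h, (h < N)%N -> J h w = J h w' /\ T h w = T h w') -> S w -> S w') ->
  measurable S.
Proof.
move=> HS.
pose hist (w : Omega) : {ffun 'I_N -> 'I_D * nat} := [ffun h : 'I_N => (J h w, T h w)].
pose G (g : {ffun 'I_N -> 'I_D * nat}) : set Omega :=
  if pselect (exists w', S w' /\ hist w' = g) is left _ then hist @^-1` [set g] else set0.
have -> : S = \bigcup_g G g.
  apply/seteqP; split => w /=.
  - move=> Sw; exists (hist w) => //; rewrite /G; case: pselect => // nE.
    by exfalso; apply: nE; exists w.
  - move=> [g _]; rewrite /G; case: pselect => [[w' [Sw' <-]] /= hw|//].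
    apply: (HS w' w) Sw' => h hN.
    have := congr1 (fun f : {ffun 'I_N -> 'I_D * nat} => f (Ordinal hN)) hw; rewrite !ffunE => -[-> ->]; by [].
apply: countable_bigcupT_measurable => // g.
rewrite /G; case: pselect => _; last exact: measurable0.
have -> : hist @^-1` [set g] = \big[setI/setT]_(h <- enum 'I_N)
    (J h @^-1` [set (g h).1] `&` T h @^-1` [set (g h).2]).
  apply/seteqP; split => w /=.
  - move=> hw; apply/bigI_mem => h _; rewrite -hw !ffunE; by split.
  - move/bigI_mem => H; apply/ffunP => h; rewrite ffunE.
    have [/= -> ->] := H h (mem_enum _ h).
    by case: (g h).
apply: bigsetI_measurable => h _; apply: measurableI; [exact: mJ | exact: mT].
Qed.

Lemma Pr_ge0 (A : set Omega) : 0 <= Pr P A.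
Proof. by apply: fine_ge0; apply: measure_ge0. Qed.

Lemma PrU (A B : set Omega) : measurable A -> measurable B -> A `&` B = set0 ->
  Pr P (A `|` B) = Pr P A + Pr P B.
Proof.
move=> mA mB AB; rewrite /Pr measureU // fineD //; exact: fin_num_measure.
Qed.

Lemma Pr_le (A B : set Omega) : measurable A -> measurable B -> A `<=` B ->
  Pr P A <= Pr P B.
Proof.
move=> mA mB AB; apply: fine_le; try exact: fin_num_measure.
by apply: le_measure => //; rewrite inE.
Qed.

Lemma Pr0 : Pr P set0 = 0.
Proof. by rewrite /Pr measure0. Qed.

Lemma Pr_big (I : eqType) (s : seq I) (F : I -> set Omega) (A : set Omega) :
  uniq s -> (forall i, i \in s -> measurable (F i)) ->
  (forall i k w, i \in s -> k \in s -> F i w -> F k w -> i = k) ->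
  (forall w, A w <-> exists i, i \in s /\ F i w) ->
  Pr P A = \sum_(i <- s) Pr P (F i).
Proof.
move=> us mF dF HA.
have -> : A = \big[setU/set0]_(i <- s) F i.
  by apply/seteqP; split => w; [move/HA/bigU_mem|move/bigU_mem/HA].
elim: s us mF dF {HA} => [|x s IH]; first by rewrite !big_nil Pr0.
move=> /= /andP[xs us] mF dF.
have m1 : measurable (F x) by apply: mF; exact: mem_head.
have m2 : measurable (\big[setU/set0]_(i <- s) F i).
  by rewrite big_seq; apply: bigsetU_measurable => i Hi; apply: mF; rewrite inE Hi orbT.
have d12 : F x `&` \big[setU/set0]_(i <- s) F i = set0.
  apply/seteqP; split => w // [Fx /bigU_mem [i [Hi Fi]]].
  have xi := dF x i w (mem_head _ _) (ltac:(by rewrite inE Hi orbT)) Fx Fi.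
  by move: xs; rewrite xi Hi.
rewrite !big_cons PrU //.
congr (_ + _); apply: IH => //.
- by move=> i Hi; apply: mF; rewrite inE Hi orbT.
- by move=> i k w Hi Hk; apply: dF; rewrite inE ?Hi ?Hk orbT.
Qed.

Lemma T_le m n w : (m <= n)%N -> (T m w <= T n w)%N.
Proof.
elim: n => [|n IH]; first by rewrite leqn0 => /eqP->.
rewrite leq_eqVlt => /orP[/eqP->//|]; rewrite ltnS => /IH H.
exact: (leq_trans H (ltnW (Tinc n w))).
Qed.

Lemma T_lt m n w : (m < n)%N -> (T m w < T n w)%N.
Proof. by move=> mn; exact: (leq_trans (Tinc m w) (T_le _ _ w mn)). Qed.

Lemma T_ge n w : (n <= T n w)%N.
Proof. elim: n => [|n IH] //; exact: (leq_ltn_trans IH (Tinc n w)). Qed.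

Lemma Ncount_ge t w n : (T n w <= t)%N -> (n <= Ncount T t w)%N.
Proof.
move=> Hn; have nt : (n < t.+1)%N by rewrite ltnS (leq_trans (T_ge n w) Hn).
exact: (@leq_bigmax_cond _ (fun i : 'I_t.+1 => (T i w <= t)%N) (fun i => (i : nat)) (Ordinal nt)).
Qed.

Lemma Ncount_spec t w :
  (T (Ncount T t w) w <= t)%N /\ (t < T (Ncount T t w).+1 w)%N.
Proof.
have : (0 < #|(fun i : 'I_t.+1 => (T i w <= t)%N)|)%N.
  by apply/card_gt0P; exists ord0; rewrite /in_mem /= T0.
move=> /(eq_bigmax_cond (fun i : 'I_t.+1 => (i : nat))) [i0 Hi0 E].
rewrite /Ncount E; split; first exact: Hi0.
rewrite ltnNge; apply/negP => H.
have := Ncount_ge _ _ _ H; rewrite /Ncount E ltnn; by [].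
Qed.

Lemma Ncount_eq t w n : (T n w <= t)%N -> (t < T n.+1 w)%N -> Ncount T t w = n.
Proof.
move=> H1 H2; apply/eqP; rewrite eqn_leq Ncount_ge // andbT.
have [S1 S2] := Ncount_spec t w.
rewrite leqNgt; apply/negP => lt.
have := T_le _ _ w lt; move: H2 S1; lia.
Qed.

Lemma Ncount_det t w w' : (forall h, (h < t.+1)%N -> T h w = T h w') ->
  Ncount T t w = Ncount T t w'.
Proof.
move=> H; rewrite /Ncount; apply: eq_bigl => i; rewrite H //.
Qed.


Lemma Ncount_le t w : (Ncount T t w <= t)%N.
Proof. have [H _] := Ncount_spec t w; exact: leq_trans (T_ge _ w) H. Qed.

Lemma ZB_det t w w' : (forall h, (h < t.+1)%N -> J h w = J h w' /\ T h w = T h w') ->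
  Zproc J T t w = Zproc J T t w' /\ Bproc T t w = Bproc T t w'.
Proof.
move=> H; have E : Ncount T t w = Ncount T t w'.
  by apply: Ncount_det => h /H [].
rewrite /Zproc /Bproc -E; have [-> ->] := H (Ncount T t w) (ltac:(by rewrite ltnS Ncount_le)); by [].
Qed.

Variables (a : nat) (Q : nat -> 'I_D -> 'I_D -> nat -> nat -> R).
Hypothesis hMRP : is_age_MRP P J T a Q.

Definition Hist m (js : nat -> 'I_D) (ts : nat -> nat) : set Omega :=
  [set w | forall h, (h <= m)%N -> J h w = js h /\ T h w = ts h].

Lemma Hist_meas m js ts : measurable (Hist m js ts).
Proof.
apply: (@meas_det m.+1) => w w' H Hw h hm.
have [<- <-] := H h (ltac:(by rewrite ltnS)); exact: Hw h hm.
Qed.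

Lemma meas_Tgt n x : measurable [set w | (x < T n w)%N].
Proof. by apply: (@meas_det n.+1) => w w' H /=; have [_ <-] := H n (ltnSn n). Qed.

Lemma meas_Tle n x : measurable [set w | (T n w <= x)%N].
Proof. by apply: (@meas_det n.+1) => w w' H /=; have [_ <-] := H n (ltnSn n). Qed.

Lemma meas_JTle n k x : measurable [set w | J n w = k /\ (T n w <= x)%N].
Proof. by apply: (@meas_det n.+1) => w w' H /=; have [<- <-] := H n (ltnSn n). Qed.

Lemma meas_JT n k x : measurable [set w | J n w = k /\ T n w = x].
Proof. by apply: (@meas_det n.+1) => w w' H /=; have [<- <-] := H n (ltnSn n). Qed.

Lemma meas_F t j u' : measurable [set w | Zproc J T t w = j /\ Bproc T t w = u'].
Proof. by apply: (@meas_det t.+1) => w w' H /=; have [<- <-] := ZB_det _ _ _ H. Qed.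

Lemma MRP1 n js ts j x :
  Pr P (Hist n js ts `&` [set w | J n.+1 w = j /\ (T n.+1 w <= x)%N])
  = Q (a + ts n) (js n) j (ts n) x * Pr P (Hist n js ts).
Proof.
have -> : Hist n js ts = [set w | forall h, (h <= n)%N ->
                J h w = js h /\ T h w = ts h /\ Aproc a T h w = (a + ts h)%N].
  apply/seteqP; split => w /= H h hh; have := H h hh.
    by move=> [e1 e2]; rewrite /Aproc e1 e2.
  by move=> [e1 [e2 _]].
exact: hMRP.
Qed.

Lemma Hbar_step n js ts x :
  Pr P (Hist n js ts `&` [set w | (x < T n.+1 w)%N])
  = Hbar Q (a + ts n) (js n) (ts n) x * Pr P (Hist n js ts).
Proof.
have mH := Hist_meas n js ts.
have E1 : Pr P (Hist n js ts) = Pr P (Hist n js ts `&` [set w | (T n.+1 w <= x)%N])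
   + Pr P (Hist n js ts `&` [set w | (x < T n.+1 w)%N]).
  rewrite -PrU.
  - congr (Pr P _); apply/seteqP; split => w /=.
      by move=> Hw; case: (leqP (T n.+1 w) x) => ?; [left|right].
    by case=> -[].
  - exact/measurableI/meas_Tle.
  - exact/measurableI/meas_Tgt.
  - by apply/seteqP; split => w //= [[_ H1] [_ H2]]; lia.
have E2 : Pr P (Hist n js ts `&` [set w | (T n.+1 w <= x)%N])
    = \sum_(j <- index_enum 'I_D) Pr P (Hist n js ts `&` [set w | J n.+1 w = j /\ (T n.+1 w <= x)%N]).
  apply: Pr_big.
  - exact: index_enum_uniq.
  - by move=> j _; apply/measurableI/meas_JTle.
  - by move=> i k w _ _ [_ [<- _]] [_ [<- _]].
  - move=> w; split.
      by move=> [Hw Hx]; exists (J n.+1 w); rewrite mem_index_enum.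
    by move=> [i [_ [Hw [_ Hx]]]].
have E3 : Pr P (Hist n js ts `&` [set w | (T n.+1 w <= x)%N])
    = (\sum_(j < D) Q (a + ts n) (js n) j (ts n) x) * Pr P (Hist n js ts).
  by rewrite E2 mulr_suml; apply: eq_bigr => j _; rewrite MRP1.
rewrite /Hbar; move: E1; rewrite E3 => E1; rewrite mulrBl mul1r {1}E1; ring.
Qed.

Lemma Hist_ext n js ts k th :
  Hist n js ts `&` [set w | J n.+1 w = k /\ T n.+1 w = th]
  = Hist n.+1 (fun h => if h == n.+1 then k else js h)
              (fun h => if h == n.+1 then th else ts h).
Proof.
apply/seteqP; split => w /=.
  move=> [H [e1 e2]] h; rewrite leq_eqVlt => /orP[/eqP->|hn]; rewrite ?eqxx //.
  by rewrite (ltn_eqF hn); apply: H; rewrite -ltnS.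
move=> H; split; last by have := H n.+1 (leqnn _); rewrite eqxx.
move=> h hn; have := H h (leq_trans hn (leqnSn n)).
by rewrite (ltn_eqF (hn : (h < n.+1)%N)).
Qed.

Lemma q_step n js ts k th : (ts n < th)%N ->
  Pr P (Hist n js ts `&` [set w | J n.+1 w = k /\ T n.+1 w = th])
  = qker Q (a + ts n) (js n) k (ts n) th * Pr P (Hist n js ts).
Proof.
move=> lt; rewrite /qker lt.
case: th lt => [//|th] lt /=.
have mH := Hist_meas n js ts.
have := MRP1 n js ts k th.+1.
rewrite (_ : _ `&` _ = (Hist n js ts `&` [set w | J n.+1 w = k /\ (T n.+1 w <= th)%N])
     `|` (Hist n js ts `&` [set w | J n.+1 w = k /\ T n.+1 w = th.+1])).
  rewrite PrU; first last.
  - by apply/seteqP; split => w //= [[_ [_ H1]] [_ [_ H2]]]; lia.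
  - exact/measurableI/meas_JT.
  - exact/measurableI/meas_JTle.
  rewrite MRP1 => E; rewrite mulrBl -E; ring.
apply/seteqP; split => w /=.
  move=> [Hw [Hk Hx]]; rewrite leq_eqVlt in Hx; case/orP: Hx => [/eqP Hx|Hx].
    by right.
  by left; split => //; split => //; rewrite -ltnS.
by case=> -[Hw [Hk Hx]]; split => //; split => //; lia.
Qed.


Lemma lift n k th (X : set Omega) (alpha : R) : measurable X ->
  (forall js ts, js n = k -> ts n = th ->
     Pr P (Hist n js ts `&` X) = alpha * Pr P (Hist n js ts)) ->
  Pr P ([set w | J n w = k /\ T n w = th] `&` X)
  = alpha * Pr P [set w | J n w = k /\ T n w = th].
Proof.
move=> mX H.
pose HG (g : {ffun 'I_n.+1 -> 'I_D * 'I_th.+1}) :=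
  Hist n (fun h => (g (inord h)).1) (fun h => val (g (inord h)).2).
set A := [set w | J n w = k /\ T n w = th].
have key : forall Y, measurable Y ->
    Pr P (A `&` Y) = \sum_(g <- enum {ffun 'I_n.+1 -> 'I_D * 'I_th.+1}) Pr P (HG g `&` A `&` Y).
  move=> Y mY; apply: Pr_big.
  - exact: enum_uniq.
  - move=> g _; apply: measurableI => //; apply: measurableI; [exact: Hist_meas| exact: meas_JT].
  - move=> g g' w _ _ [[Hg _] _] [[Hg' _] _]; apply/ffunP => h.
    have hn : (h <= n)%N by rewrite -ltnS.
    have [e1 e2] := Hg h hn; have [e1' e2'] := Hg' h hn.
    rewrite inord_val in e1 e2 e1' e2'.
    move: e1 e2 e1' e2'; case: (g h) => [a1 b1]; case: (g' h) => [a2 b2] /= e1 e2 e1' e2'.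
    congr pair; [by rewrite -e1 -e1' | apply: val_inj; by rewrite /= -e2 -e2'].
  - move=> w; split.
    + move=> [Aw Yw]; exists [ffun h : 'I_n.+1 => (J h w, inord (T h w) : 'I_th.+1)].
      split; first exact: mem_enum.
      split => //; split => // h hn; rewrite ffunE /= !inordK //.
      rewrite ltnS; case: Aw => _ <-; exact: T_le.
    + by move=> [g [_ [[_ Aw] Yw]]].
rewrite (key X mX); have := key setT measurableT; rewrite setIT => ->.
rewrite mulr_sumr; apply: eq_bigr => g _.
have [[m1 m2]|nm] := pselect ((g (inord n)).1 = k /\ val (g (inord n)).2 = th).
  have -> : HG g `&` A = HG g.
    apply/seteqP; split => w; first by case.
    move=> Hw; split => //; have [e1 e2] := Hw n (leqnn n).
    by rewrite /A /= e1 e2 m1 m2.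
  by rewrite setIT; apply: H.
have -> : HG g `&` A = set0.
  apply/seteqP; split => w // [Hw [Aw1 Aw2]]; apply: nm.
  by have [<- <-] := Hw n (leqnn n).
by rewrite !set0I Pr0 mulr0.
Qed.


Lemma meas_JTr n k x y :
  measurable [set w | J n w = k /\ (x < T n w)%N /\ (T n w <= y)%N].
Proof. by apply: (@meas_det n.+1) => w w' H /=; have [<- <-] := H n (ltnSn n). Qed.

Lemma meas_condev k s u : measurable (condev J T a k s u).
Proof.
apply: (@meas_det s.+1) => w w' H; rewrite /condev /=.
have [<- <-] := ZB_det _ _ _ H; move=> [-> [-> _]]; split => //; split => //.
Qed.

Lemma condev_sum (Y : set Omega) k s u : measurable Y -> (u <= s)%N ->
  Pr P (Y `&` condev J T a k s u)
  = \sum_(n <- index_iota 0 s.+1)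
      Pr P ([set w | J n w = k /\ T n w = (s - u)%N] `&` ([set w | (s < T n.+1 w)%N] `&` Y)).
Proof.
move=> mY us; apply: Pr_big.
- exact: iota_uniq.
- move=> n _; apply: measurableI; first exact: meas_JT.
  by apply: measurableI => //; exact: meas_Tgt.
- move=> n n' w _ _ [[_ e1] [e2 _]] [[_ e1'] [e2' _]].
  have l1 : (T n w <= s)%N by rewrite e1 leq_subr.
  have l1' : (T n' w <= s)%N by rewrite e1' leq_subr.
  by rewrite -(Ncount_eq _ _ _ l1 e2) -(Ncount_eq _ _ _ l1' e2').
- move=> w; split.
  + move=> [Yw [Zw [Bw _]]].
    have [S1 S2] := Ncount_spec s w.
    exists (Ncount T s w); split.
      by rewrite mem_index_iota /= ltnS Ncount_le.
    split; last by split.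
    split; first exact: Zw.
    move: Bw S1; rewrite /Bproc; lia.
  + move=> [n [_ [[Jn Tn] [Tn1 Yw]]]].
    have Tns : (T n w <= s)%N by rewrite Tn leq_subr.
    have E := Ncount_eq _ _ _ Tns Tn1.
    split => //; rewrite /condev /Zproc /Bproc /Aproc /= E Jn Tn subKn //.
Qed.


Section Main.
Variables (t : nat) (j : 'I_D) (u' : nat).

Let F := [set w | Zproc J T t w = j /\ Bproc T t w = u'].
Let phi' (k : 'I_D) (th : nat) := phi P J T a k j 0%N th u' t.

Definition Cval (k : 'I_D) (th0 x : nat) : R :=
  (k == j)%:R * (u' == t - th0)%N%:R * Hbar Q (a + th0) k th0 t
  + \sum_(k' < D) \sum_(x.+1 <= th < t.+1) qker Q (a + th0) k k' th0 th * phi' k' th.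

Lemma decomp m js ts x : (ts m <= x)%N -> (x <= t)%N ->
  (forall th, (x < th)%N -> (th <= t)%N -> forall m' js' ts', ts' m' = th ->
     Pr P (Hist m' js' ts' `&` F) = phi' (js' m') th * Pr P (Hist m' js' ts')) ->
  Pr P (Hist m js ts `&` ([set w | (x < T m.+1 w)%N] `&` F))
  = Cval (js m) (ts m) x * Pr P (Hist m js ts).
Proof.
move=> mx xt IHM.
set H := Hist m js ts.
have mH : measurable H by exact: Hist_meas.
have mF : measurable F by exact: meas_F.
pose X0 := H `&` [set w | (t < T m.+1 w)%N] `&` F.
pose Yk (k' : 'I_D) := H `&` [set w | J m.+1 w = k' /\ (x < T m.+1 w)%N /\ (T m.+1 w <= t)%N] `&` F.
pose Y := H `&` [set w | (x < T m.+1 w)%N /\ (T m.+1 w <= t)%N] `&` F.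
have mX0 : measurable X0 by apply: measurableI => //; apply: measurableI => //; exact: meas_Tgt.
have mY : measurable Y.
  apply: measurableI => //; apply: measurableI => //.
  by apply: (@meas_det m.+2) => w w' HH /=; have [_ <-] := HH m.+1 (ltnSn _).
have E1 : Pr P (H `&` ([set w | (x < T m.+1 w)%N] `&` F)) = Pr P X0 + Pr P Y.
  rewrite -PrU //; last first.
    by apply/seteqP; split => w //= [[[_ H1] _] [[_ [_ H2]] _]]; move: H1 => /= H1; lia.
  congr (Pr P _); apply/seteqP; split => w /=.
    move=> [Hw [Tw Fw]]; case: (leqP (T m.+1 w) t) => ?; [right|left] => //.
  case=> -[[Hw Tw] Fw]; split => //; split => //; move: Tw => /=; [lia | by case].
have E2 : Pr P X0 = ((js m == j)%:R * (u' == t - ts m)%N%:R * Hbar Q (a + ts m) (js m) (ts m) t)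
                    * Pr P H.
  have NX : forall w, H w -> (t < T m.+1 w)%N -> Zproc J T t w = js m /\ Bproc T t w = (t - ts m)%N.
    move=> w Hw Tw; have [e1 e2] := Hw m (leqnn m).
    have E := Ncount_eq t w m (ltac:(by rewrite e2; exact: leq_trans mx xt)) Tw.
    by rewrite /Zproc /Bproc E e1 e2.
  have [[kj ut]|nc] := pselect (js m = j /\ u' = (t - ts m)%N).
    have -> : X0 = H `&` [set w | (t < T m.+1 w)%N].
      apply/seteqP; split => w /=; first by case.
      move=> [Hw Tw]; split => //; rewrite /F /=; have [-> ->] := NX w Hw Tw; by rewrite kj ut.
    by rewrite Hbar_step kj ut !eqxx mul1r mul1r.
  have -> : X0 = set0.
    apply/seteqP; split => w // [[Hw Tw] [Zw Bw]]; apply: nc.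
    by have [<- <-] := NX w Hw Tw.
  rewrite Pr0; case: eqP => [kj|_]; last by rewrite !mul0r.
  case: eqP => [ut|_]; [by exfalso; apply: nc | by rewrite mulr0 !mul0r].
have E3 : Pr P Y = \sum_(k' <- index_enum 'I_D) Pr P (Yk k').
  apply: Pr_big.
  - exact: index_enum_uniq.
  - move=> k' _; apply: measurableI => //; apply: measurableI => //; exact: meas_JTr.
  - by move=> k1 k2 w _ _ [[_ [<- _]] _] [[_ [<- _]] _].
  - move=> w; split.
      by move=> [[Hw Tw] Fw]; exists (J m.+1 w); split; [exact: mem_index_enum|].
    by move=> [k' [_ [[Hw [_ Tw]] Fw]]].
have E4 : forall k', Pr P (Yk k') = \sum_(x.+1 <= th < t.+1)
      (qker Q (a + ts m) (js m) k' (ts m) th * phi' k' th) * Pr P H.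
  move=> k'.
  have -> : Pr P (Yk k') = \sum_(x.+1 <= th < t.+1)
      Pr P (H `&` [set w | J m.+1 w = k' /\ T m.+1 w = th] `&` F).
    apply: Pr_big.
    - exact: iota_uniq.
    - move=> th _; apply: measurableI => //; apply: measurableI => //; exact: meas_JT.
    - by move=> t1 t2 w _ _ [[_ [_ <-]] _] [[_ [_ <-]] _].
    - move=> w; split.
        move=> [[Hw [Jw [T1 T2]]] Fw]; exists (T m.+1 w); split.
          by rewrite mem_index_iota; apply/andP; split.
        by [].
      move=> [th [Hth [[Hw [Jw Tw]] Fw]]]; move: Hth; rewrite mem_index_iota => /andP[l1 l2].
      by split => //; split => //; split => //; rewrite Tw; split.
  rewrite big_seq_cond [in RHS]big_seq_cond; apply: eq_bigr => th.
  rewrite andbT mem_index_iota => /andP[l1 l2].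
  have e := IHM th l1 (ltac:(by rewrite -ltnS)) m.+1 (fun h => if h == m.+1 then k' else js h)
     (fun h => if h == m.+1 then th else ts h) (ltac:(by cbv beta; rewrite eqxx)).
  rewrite Hist_ext e; cbv beta; rewrite eqxx.
  rewrite -Hist_ext q_step; last by exact: leq_ltn_trans mx l1.
  by rewrite mulrA [phi' k' th * _]mulrC.

rewrite E1 E2 E3 /Cval mulrDl; congr (_ + _).
rewrite mulr_suml; apply: eq_bigr => k' _; rewrite E4 mulr_suml //.
Qed.

Lemma markov r : (r <= t)%N -> forall m js ts, ts m = (t - r)%N ->
  Pr P (Hist m js ts `&` F) = phi' (js m) (t - r) * Pr P (Hist m js ts).
Proof.
elim/ltn_ind: r => r IH rt m js ts tsm.
set th0 := (t - r)%N.
have IHM : forall th, (th0 < th)%N -> (th <= t)%N -> forall m' js' ts', ts' m' = th ->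
    Pr P (Hist m' js' ts' `&` F) = phi' (js' m') th * Pr P (Hist m' js' ts').
  move=> th lt le m' js' ts' e.
  have := IH (t - th)%N (ltac:(rewrite /th0 in lt; lia)) (leq_subr _ _) m' js' ts'
    (ltac:(rewrite e; lia)).
  by rewrite subKn.
set k := js m.
pose C := Cval k th0 th0.
have HC : forall m' js' ts', js' m' = k -> ts' m' = th0 ->
    Pr P (Hist m' js' ts' `&` ([set w | (th0 < T m'.+1 w)%N] `&` F))
    = C * Pr P (Hist m' js' ts').
  move=> m' js' ts' ek et.
  rewrite (decomp m' js' ts' th0 (ltac:(by rewrite et)) (leq_subr _ _) IHM) ek et //.
have HA : forall n, Pr P ([set w | J n w = k /\ T n w = th0]
      `&` ([set w | (th0 < T n.+1 w)%N] `&` F))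
    = C * Pr P ([set w | J n w = k /\ T n w = th0]).
  move=> n; apply: lift.
    by apply: measurableI; [exact: meas_Tgt | exact: meas_F].
  by move=> js' ts' e1 e2; exact: HC.
have HA1 : forall n, Pr P ([set w | J n w = k /\ T n w = th0]
      `&` ([set w | (th0 < T n.+1 w)%N] `&` setT))
    = Pr P [set w | J n w = k /\ T n w = th0].
  move=> n; rewrite setIT; congr (Pr P _); apply/seteqP; split => w; first by case.
  by move=> [e1 e2]; split => //=; rewrite -e2; exact: Tinc.
have EN : Pr P (F `&` condev J T a k th0 0) = C * Pr P (condev J T a k th0 0).
  rewrite condev_sum //; last exact: meas_F.
  rewrite -[condev J T a k th0 0]setTI condev_sum // subn0 mulr_sumr.
  by apply: eq_bigr => n _; rewrite HA HA1.
have eq : Hist m js ts `&` F = Hist m js ts `&` ([set w | (th0 < T m.+1 w)%N] `&` F).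
  apply/seteqP; split => w [Hw Fw]; last by case: Fw.
  split => //; split => //=; have [_ e] := Hw m (leqnn m); rewrite /th0 -tsm -e; exact: Tinc.
rewrite eq HC //.
have [z|nz] := eqVneq (Pr P (condev J T a k th0 0)) 0.
  have -> : Pr P (Hist m js ts) = 0.
    apply/eqP; rewrite eq_le Pr_ge0 andbT -z; apply: Pr_le.
    - exact: Hist_meas.
    - exact: meas_condev.
    move=> w Hw; have [e1 e2] := Hw m (leqnn m).
    have l1 : (T m w <= th0)%N by move: e2 tsm; rewrite /th0; lia.
    have l2 : (th0 < T m.+1 w)%N by move: (Tinc m w) e2 tsm; rewrite /th0; lia.
    have E := Ncount_eq th0 w m l1 l2.
    have e3 : T m w = th0 by move: e2 tsm; rewrite /th0; lia.
    by rewrite /condev /= /Zproc /Bproc /Aproc E e1 e3 subnn.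
  by rewrite !mulr0.
by rewrite /phi' /phi EN mulfK.
Qed.

Lemma phi_zero k th : (t - u' < th)%N -> (th <= t)%N -> phi' k th = 0.
Proof.
move=> lt le; rewrite /phi' /phi.
suff -> : F `&` condev J T a k th 0 = set0 by rewrite Pr0 mul0r.
apply/seteqP; split => w //= [[Zw Bw] [Zc [Bc _]]].
move: Bw Bc; rewrite /Bproc => Bw Bc.
have [S1 _] := Ncount_spec th w; have [S2 _] := Ncount_spec t w.
have l := T_le _ _ w (Ncount_ge t w _ (leq_trans S1 le)).
lia.
Qed.

Lemma final i u s : (u <= s)%N -> (s <= t)%N ->
  0 < Pr P (condev J T a i s u) ->
  0 < Hbar Q (a + (s - u))%N i (s - u)%N s ->
  phi P J T a i j u s u' t =
    (i == j)%:R * (u' == t - s + u)%N%:R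
      * (Hbar Q (a + (s - u))%N i (s - u)%N t / Hbar Q (a + (s - u))%N i (s - u)%N s)
    + \sum_(k < D) \sum_(s.+1 <= theta < (t - u').+1)
        (qker Q (a + (s - u))%N i k (s - u)%N theta
           / Hbar Q (a + (s - u))%N i (s - u)%N s)
        * phi P J T a k j 0%N theta u' t.
Proof.
move=> us st hpos hH.
set th0 := (s - u)%N.
set Hb := Hbar Q (a + th0)%N i th0 s.
have IHM : forall th, (s < th)%N -> (th <= t)%N -> forall m' js' ts', ts' m' = th ->
    Pr P (Hist m' js' ts' `&` F) = phi' (js' m') th * Pr P (Hist m' js' ts').
  move=> th lt le m' js' ts' e.
  have := markov (t - th)%N (leq_subr _ _) m' js' ts' (ltac:(by rewrite e subKn)).
  by rewrite subKn.
pose A n := [set w | J n w = i /\ T n w = th0].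
pose S := \sum_(n <- index_iota 0 s.+1) Pr P (A n).
have HA : forall n, Pr P (A n `&` ([set w | (s < T n.+1 w)%N] `&` F))
    = Cval i th0 s * Pr P (A n).
  move=> n; apply: lift.
    by apply: measurableI; [exact: meas_Tgt | exact: meas_F].
  move=> js' ts' e1 e2.
  rewrite (decomp n js' ts' s (ltac:(by rewrite e2 /th0 leq_subr)) st IHM) e1 e2 //.
have HB : forall n, Pr P (A n `&` ([set w | (s < T n.+1 w)%N] `&` setT))
    = Hb * Pr P (A n).
  move=> n; rewrite setIT; apply: lift; first exact: meas_Tgt.
  by move=> js' ts' e1 e2; rewrite Hbar_step e1 e2.
have num : Pr P (F `&` condev J T a i s u) = Cval i th0 s * S.
  rewrite condev_sum //; last exact: meas_F.
  by rewrite /S mulr_sumr; apply: eq_bigr => n _; rewrite HA.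
have den : Pr P (condev J T a i s u) = Hb * S.
  rewrite -[condev J T a i s u]setTI condev_sum //.
  by rewrite /S mulr_sumr; apply: eq_bigr => n _; rewrite HB.
have Sn0 : S != 0.
  by apply/eqP => S0; move: hpos; rewrite den S0 mulr0 ltxx.
have Hbn0 : Hb != 0 by rewrite gt_eqF.
rewrite /phi num den.
have -> : Cval i th0 s * S / (Hb * S) = Cval i th0 s / Hb.
  by rewrite invfM mulrACA divff // mulr1.
rewrite /Cval mulrDl; congr (_ + _).
  have -> : (t - th0 = t - s + u)%N by rewrite /th0; lia.
  by rewrite !mulrA.
rewrite mulr_suml; apply: eq_bigr => k _; rewrite mulr_suml.
have term : forall th, qker Q (a + th0) i k th0 th * phi' k th / Hb
     = qker Q (a + th0) i k th0 th / Hb * phi P J T a k j 0 th u' t.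
  by move=> th; rewrite mulrAC.
case: (leqP s (t - u')) => h.
  rewrite (@big_cat_nat _ _ _ (t - u').+1) //=; last by rewrite ltnS leq_subr.
  rewrite [X in _ + X]big1_seq ?addr0; first by apply: eq_bigr => th _; exact: term.
  move=> th /andP[_]; rewrite mem_index_iota => /andP[l1 l2].
  by rewrite phi_zero ?mulr0 ?mul0r //; rewrite -ltnS.
rewrite [in RHS]big_geq; last by rewrite ltnS; exact: ltnW.
rewrite big1_seq // => th /andP[_]; rewrite mem_index_iota => /andP[l1 l2].
have l3 : (t - u' < th)%N by exact: (leq_trans h (ltnW l1)).
have l4 : (th <= t)%N by rewrite -ltnS.
by rewrite phi_zero // mulr0 mul0r.
Qed.

End Main.

End Base.

Theorem proposition1 (R : realType) (d : measure_display) (Omega : measurableType d)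
  (P : probability Omega R) (D : nat)
  (J : nat -> Omega -> 'I_D) (T : nat -> Omega -> nat) (a : nat)
  (Q : nat -> 'I_D -> 'I_D -> nat -> nat -> R)
  (mJ : forall (n : nat) (j : 'I_D), measurable (J n @^-1` [set j]))
  (mT : forall (n t : nat), measurable (T n @^-1` [set t]))
  (T0 : forall w, T 0%N w = 0%N)
  (Tinc : forall (n : nat) w, (T n w < T n.+1 w)%N)
  (hMRP : is_age_MRP P J T a Q)
  (i j : 'I_D) (u s u' t : nat)
  (hus : (u <= s)%N) (hst : (s <= t)%N)
  (hpos : 0 < Pr P (condev J T a i s u))
  (hH : 0 < Hbar Q (a + (s - u))%N i (s - u)%N s) :
  phi P J T a i j u s u' t =
    (i == j)%:R * (u' == t - s + u)%N%:R
      * (Hbar Q (a + (s - u))%N i (s - u)%N t / Hbar Q (a + (s - u))%N i (s - u)%N s)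
    + \sum_(k < D) \sum_(s.+1 <= theta < (t - u').+1)
        (qker Q (a + (s - u))%N i k (s - u)%N theta
           / Hbar Q (a + (s - u))%N i (s - u)%N s)
        * phi P J T a k j 0%N theta u' t.
by apply: final.
Qed.
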